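(* Let $\mathsf{Prop}$ be a non-empty finite set of propositions and $\mathsf{L}$ any fragment of $\mathsf{ATL}(\mathsf{Prop})$. For every sample $\mathcal{S}=(\mathcal{P},\mathcal{N})$ of concurrent game structures in $\mathcal{C}(\mathsf{Prop})$, if there is an $\mathcal{S}$-separating $\mathsf{L}$-formula, then there is one of size at most $2^n$, where $n:=\sum_{C\in\mathcal{P}\cup\mathcal{N}}|Q_C|$.
   Context: A concurrent game structure is $C=(Q,I,k,P,\pi,d,\delta)$: $Q=Q_C$ a finite set of states, $I\subseteq Q$ initial states, $k\ge1$ the number of agents ($\mathsf{Ag}=\{1,\dots,k\}$), $P$ a finite non-empty set of propositions, $\pi:Q\to2^P$, $d:Q\times\mathsf{Ag}\to\mathbb{N}_{\ge1}$ the number of actions of each agent at each state, and $\delta$ mapping each state $q$ and tuple $(\alpha_1,\dots,\alpha_k)$ with $\alpha_a\in\{1,\dots,d(q,a)\}$ to a successor state. For a coalition $A\subseteq\mathsf{Ag}$ and a tuple $\alpha$ of actions for agents in $A$ at $q$, $\mathsf{Succ}(q,\alpha)$ is the set of states $\delta(q,(\alpha,\alpha'))$ over all action tuples $\alpha'$ of the other agents. A strategy of agent $a$ maps each $\rho_0\cdots\rho_n\in Q^+$ to an action in $\{1,\dots,d(\rho_n,a)\}$; a strategy profile $s$ for $A$ is one strategy per agent of $A$, and $\mathsf{O}(q,s)$ is the set of $\rho\in Q^\omega$ with $\rho[0]=q$ and $\rho[i+1]\in\mathsf{Succ}(\rho[i],(s_a(\rho[0]\cdots\rho[i]))_{a\in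 A})$ for all $i$. $\mathcal{C}(\mathsf{Prop})$ is the set of such $C$ with $P\subseteq\mathsf{Prop}$. $\mathsf{ATL}(\mathsf{Prop})$-formulas: $\varphi::=p\mid\neg\varphi\mid\varphi\vee\varphi\mid\varphi\wedge\varphi\mid\langle\langle A\rangle\rangle\mathbf{X}\varphi\mid\langle\langle A\rangle\rangle\mathbf{F}\varphi\mid\langle\langle A\rangle\rangle\mathbf{G}\varphi\mid\langle\langle A\rangle\rangle(\varphi\,\mathbf{U}\,\varphi)$ with $p\in\mathsf{Prop}$ and $A$ a coalition of agents. Semantics: $q\models p$ iff $p\in\pi(q)$; Boolean connectives as usual; $q\models\langle\langle A\rangle\rangle\mathbf{X}\varphi$ iff some profile $s$ for $A$ has $\rho[1]\models\varphi$ for all $\rho\in\mathsf{O}(q,s)$; $\mathbf{F}$: $\exists s\,\forall\rho\in\mathsf{O}(q,s)\,\exists i$, $\rho[i]\models\varphi$; $\mathbf{G}$: $\exists s\,\forall\rho\,\forall i$, $\rho[i]\models\varphi$; $\mathbf{U}$: $\exists s\,\forall\rho\,\exists i$, $\rho[i]\models\varphi_2$ and $\forall j<i$, $\rho[j]\models\varphi_1$. $C\models\varphi$ iff all $q\in I$ satisfy $\varphi$. A fragment is given by a subset of the operators; $\mathsf{sz}(\varphi)$ is the number of distinct subformulas. A sample is a pair of finite sets of structures; a formula is $\mathcal{S}$-separating if satisfied by all structures of $\mathcal{P}$ and by none of $\mathcal{N}$. *)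

(* Defs.v *)
From HB Require Import structures.
From mathcomp Require Import all_boot.
From mathcomp Require Import finmap.
From Stdlib Require List.

Set Implicit Arguments.
Unset Strict Implicit.
Unset Printing Implicit Defensive.

Local Open Scope fset_scope.

(* Agents are 'I_k (agent i : 'I_k is the paper's agent i+1); the actions    *)
(* of agent a at q are 'I_(d q a) (the paper's 1..d(q,a), shifted by one).   *)
Record CGS (AP : finType) := {
  cgs_Q : finType;
  cgs_I : {set cgs_Q};
  cgs_k : nat;
  cgs_k_pos : 0 < cgs_k;
  cgs_P : {set AP};
  cgs_P_nonempty : cgs_P != set0;
  cgs_pi : cgs_Q -> {set AP};
  cgs_pi_sub : forall q, cgs_pi q \subset cgs_P;
  cgs_d : cgs_Q -> 'I_cgs_k -> nat;
  cgs_d_pos : forall q a, 0 < cgs_d q a;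
  cgs_delta : forall q : cgs_Q, (forall a : 'I_cgs_k, 'I_(cgs_d q a)) -> cgs_Q
}.

(* ATL(Prop) formulas.  Coalitions are finite sets of (1-based) agent names. *)
Inductive form (AP : finType) : Type :=
  | FProp of AP
  | FNeg of form AP
  | FOr of form AP & form AP
  | FAnd of form AP & form AP
  | FX of {fset nat} & form AP
  | FF of {fset nat} & form AP
  | FG of {fset nat} & form AP
  | FU of {fset nat} & form AP & form AP.

Lemma form_eq_dec (AP : finType) (x y : form AP) : {x = y} + {x <> y}.
Proof.
decide equality;
  match goal with |- {?u = ?v} + {_} =>
    by case: (eqVneq u v) => [->|/eqP h]; [left|right] end.
Defined.

HB.instance Definition _ (AP : finType) :=
  hasDecEq.Build (form AP) (compareP (@form_eq_dec AP)).

Fixpoint subf (AP : finType) (f : form AP) : seq (form AP) :=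
  f :: match f with
       | FProp _ => [::]
       | FNeg g | FX _ g | FF _ g | FG _ g => subf g
       | FOr g h | FAnd g h | FU _ g h => subf g ++ subf h
       end.

Definition sz (AP : finType) (f : form AP) : nat := size (undup (subf f)).

Inductive op := OpNeg | OpOr | OpAnd | OpX | OpF | OpG | OpU.

Fixpoint in_frag (AP : finType) (L : op -> bool) (f : form AP) : bool :=
  match f with
  | FProp _ => true
  | FNeg g => L OpNeg && in_frag L g
  | FOr g h => [&& L OpOr, in_frag L g & in_frag L h]
  | FAnd g h => [&& L OpAnd, in_frag L g & in_frag L h]
  | FX _ g => L OpX && in_frag L g
  | FF _ g => L OpF && in_frag L g
  | FG _ g => L OpG && in_frag L g
  | FU _ g h => [&& L OpU, in_frag L g & in_frag L h]
  end.

Section Semantics.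
Variables (AP : finType) (C : CGS AP).
Notation Q := (cgs_Q C).
Notation k := (cgs_k C).

Definition in_coal (A : {fset nat}) (i : 'I_k) : bool := (val i).+1 \in A.

(* A strategy of agent a maps a history rho_0 ... rho_{n-1} rho_n, given as
   (rho_0 ... rho_{n-1}, rho_n), to an action available at rho_n. *)
Definition strategy (a : 'I_k) := seq Q -> forall q : Q, 'I_(@cgs_d _ C q a).

(* a strategy profile (only the strategies of agents in the coalition matter) *)
Definition profile := forall a : 'I_k, strategy a.

Definition outcome (A : {fset nat}) (q : Q) (s : profile) (rho : nat -> Q) :=
  rho 0 = q /\
  forall i, exists beta : (forall a : 'I_k, 'I_(@cgs_d _ C (rho i) a)),
    (forall a, in_coal A a -> beta a = s a (mkseq rho i) (rho i)) /\
    rho i.+1 = cgs_delta beta.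

Fixpoint sat (f : form AP) (q : Q) {struct f} : Prop :=
  match f with
  | FProp p => p \in @cgs_pi _ C q
  | FNeg g => ~ sat g q
  | FOr g h => sat g q \/ sat h q
  | FAnd g h => sat g q /\ sat h q
  | FX A g => exists s, forall rho, outcome A q s rho -> sat g (rho 1)
  | FF A g => exists s, forall rho, outcome A q s rho -> exists i, sat g (rho i)
  | FG A g => exists s, forall rho, outcome A q s rho -> forall i, sat g (rho i)
  | FU A g h => exists s, forall rho, outcome A q s rho ->
                  exists i, sat h (rho i) /\ forall j, j < i -> sat g (rho j)
  end.

Definition models (f : form AP) : Prop := forall q, q \in cgs_I C -> sat f q.

End Semantics.

Definition separating (AP : finType) (Pos Neg : seq (CGS AP)) (f : form AP) :=
  (forall C, List.In C Pos -> models C f) /\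
  (forall C, List.In C Neg -> ~ models C f).

Definition sample_size (AP : finType) (Pos Neg : seq (CGS AP)) : nat :=
  \sum_(C <- Pos) #|cgs_Q C| + \sum_(C <- Neg) #|cgs_Q C|.

(* Main.v *)
Require Import Defs.
From mathcomp Require Import all_boot.
From Stdlib Require List.
From mathcomp Require Import zify.
From Stdlib Require Import Setoid Morphisms ClassicalEpsilon Classical.

Set Implicit Arguments.
Unset Strict Implicit.
Section Syn.
Variable AP : finType.
Implicit Types f g h x : form AP.

Fixpoint repl g h f : form AP :=
  if f == g then h else
  match f with
  | FProp p => FProp p
  | FNeg a => FNeg (repl g h a)
  | FOr a b => FOr (repl g h a) (repl g h b)
  | FAnd a b => FAnd (repl g h a) (repl g h b)
  | FX A a => FX A (repl g h a)
  | FF A a => FF A (repl g h a)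
  | FG A a => FG A (repl g h a)
  | FU A a b => FU A (repl g h a) (repl g h b)
  end.

Lemma subf_refl f : f \in subf f.
Proof. by case: f => * /=; rewrite in_cons eqxx. Qed.

Lemma subf_trans g h f : g \in subf h -> h \in subf f -> g \in subf f.
Proof.
move=> gh; elim: f => [p|a IHa|a IHa b IHb|a IHa b IHb|A a IHa|A a IHa|A a IHa|A a IHa b IHb];
  rewrite [h \in _]/= in_cons => /orP [/eqP <- // | H];
  rewrite /= in_cons ?mem_cat; apply/orP; right => //.
all: try by rewrite in_nil in H.
all: rewrite ?mem_cat in H; try (by rewrite IHa).
all: by case/orP: H => H; [rewrite IHa | rewrite IHb ?orbT].
Qed.


Ltac elimf f := elim: f => [p|a IHa|a IHa b IHb|a IHa b IHb|A a IHa|A a IHa|A a IHa|A a IHa b IHb].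

Lemma subf_size g f : g \in subf f -> size (subf g) <= size (subf f).
Proof.
elimf f; rewrite [g \in _]/= in_cons => /orP [/eqP -> //| H].
all: try by rewrite in_nil in H.
all: rewrite ?mem_cat in H; try (by move: (IHa H) => /=; lia).
all: by case/orP: H => [/IHa|/IHb] /=; rewrite size_cat; lia.
Qed.

Lemma subf_lt g f : g \in subf f -> g != f -> size (subf g) < size (subf f).
Proof.
case: f => [p|a|a b|a b|A a|A a|A a|A a b]; rewrite [g \in _]/= in_cons => /orP [/eqP -> /eqP//| H] _.
all: try by rewrite in_nil in H.
all: rewrite ?mem_cat in H; try (by move: (subf_size H) => /=; lia).

all: by case/orP: H => H; move: (subf_size H) => /=; rewrite size_cat; lia.
Qed.

Lemma subf_antisym g h : g \in subf h -> h \in subf g -> g = h.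
Proof.
move=> gh hg; apply/eqP; apply/negPn/negP => ne.
by move: (subf_lt gh ne) (subf_size hg); lia.
Qed.

Lemma repl_self g h : repl g h g = h.
Proof. by case: g => * /=; rewrite eqxx. Qed.

Lemma repl_id g h t : g \notin subf t -> repl g h t = t.
Proof.
elimf t; rewrite /= in_cons negb_or => /andP [ne H]; rewrite eq_sym (negbTE ne) //.
all: rewrite ?mem_cat ?negb_or in H; try (by rewrite IHa).
all: by case/andP: H => /IHa -> /IHb ->.
Qed.

Lemma subf_repl g h f x : x \in subf (repl g h f) ->
  x \in subf h \/ exists2 s, s \in subf f & x = repl g h s.
Proof.
elimf f; rewrite /=; case: eqP => [_|ne]; try by left.
all: rewrite /= in_cons => /orP [/eqP ->|H];
  [by right; eexists; [apply: mem_head | rewrite /= (introF eqP ne)]|].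
all: try by rewrite in_nil in H.
all: rewrite ?mem_cat in H.
all: try (case: (IHa H) => [|[s s1 s2]]; [by left|right; exists s => //; by rewrite /= in_cons ?mem_cat s1 ?orbT]).
all: case/orP: H => [/IHa|/IHb] [|[s s1 s2]]; try (by left); right; exists s => //; by rewrite /= in_cons ?mem_cat s1 ?orbT.
Qed.

Lemma in_frag_repl L g h f : in_frag L h -> in_frag L f -> in_frag L (repl g h f).
Proof.
move=> Lh; elimf f; rewrite /=; case: eqP => // _ /=.
all: try by case/andP => -> /IHa.
all: by case/and3P => -> /IHa -> /IHb.
Qed.

Lemma sat_repl (C : CGS AP) g h : (forall q : cgs_Q C, sat g q <-> sat h q) ->
  forall f (q : cgs_Q C), sat (repl g h f) q <-> sat f q.
Proof.
move=> E f; elimf f => q; rewrite /=; case: eqP => [e|_]; try (by rewrite -E -e).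
all: rewrite /=; try (by rewrite IHa); try (by rewrite IHa IHb).
all: try done; setoid_rewrite IHa; try setoid_rewrite IHb; done.
Qed.

Lemma in_frag_subf L f g : in_frag L f -> g \in subf f -> in_frag L g.
Proof.
elimf f => /= Lf; rewrite in_cons => /orP [/eqP -> //| H].
all: try by rewrite in_nil in H.
all: rewrite ?mem_cat in H; try (by case/andP: Lf => _ /IHa; apply).
all: by case/and3P: Lf => _ /IHa Ha /IHb Hb; case/orP: H; [apply: Ha | apply: Hb].
Qed.

End Syn.
Section Main.
Variable AP : finType.
Variable d0 : CGS AP.

Notation idx Ls := {i : 'I_(size Ls) & cgs_Q (nth d0 Ls i)}.

Definition sigf (Ls : seq (CGS AP)) (f : form AP) : {ffun idx Ls -> bool} :=
  [ffun x => if excluded_middle_informative (sat f (tagged x)) then true else false].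

Lemma card_idx (Ls : seq (CGS AP)) : #|{: idx Ls}| = \sum_(C <- Ls) #|cgs_Q C|.
Proof.
rewrite card_tagged sumnE big_map (big_nth d0) big_enum /= big_mkord.
by apply: eq_bigl => i; rewrite inE.
Qed.

Lemma size_length (T : Type) (s : seq T) : size s = length s.
Proof. by elim: s => //= x s ->. Qed.

Lemma nth_List (T : Type) (s : seq T) (d : T) n : List.nth n s d = nth d s n.
Proof. by elim: s n => [|x s IH] [|n] //=. Qed.

Lemma sigf_eq (Ls : seq (CGS AP)) g h : sigf Ls g = sigf Ls h ->
  forall C, List.In C Ls -> forall q : cgs_Q C, sat g q <-> sat h q.
Proof.
move=> E C HC; case: (List.In_nth Ls C d0 HC) => n [/ltP Hn eqC].
rewrite -size_length in Hn.
rewrite nth_List in eqC.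
rewrite -eqC => q.
pose x : idx Ls := existT _ (Ordinal Hn) q.
have := congr1 (fun F : {ffun idx Ls -> bool} => F x) E.
rewrite /sigf !ffunE /=.
case: excluded_middle_informative; case: excluded_middle_informative => //; tauto.
Qed.


Lemma pigeon Ls f : 2 ^ #|{: idx Ls}| < sz f ->
  exists g h, [/\ g \in subf f, h \in subf f, g != h & sigf Ls g = sigf Ls h].
Proof.
move=> big; set U := undup (subf f).
have nu : ~~ uniq (map (sigf Ls) U).
  apply/negP => u.
  have := max_card (mem (map (sigf Ls) U)).
  rewrite (card_uniqP u) size_map card_ffun card_bool.
  by move: big; rewrite /sz -/U => a b; have := leq_ltn_trans b a; rewrite ltnn.
have ninj : ~ {in U &, injective (sigf Ls)}.
  by move=> inj; rewrite map_inj_in_uniq ?undup_uniq in nu.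
apply: NNPP => nex; apply: ninj => x y xU yU e; apply: NNPP => nxy; apply: nex.
exists x, y; split; [by rewrite -mem_undup | by rewrite -mem_undup | by apply/eqP | exact: e].
Qed.

Lemma main L (Pos Neg : seq (CGS AP)) (f : form AP) : in_frag L f -> separating Pos Neg f ->
  exists f', [/\ in_frag L f', separating Pos Neg f' & sz f' <= 2 ^ sample_size Pos Neg].
Proof.
set Ls := Pos ++ Neg.
have -> : sample_size Pos Neg = #|{: idx Ls}| by rewrite card_idx big_cat.
move=> Lf Sf; move: Lf Sf; have [m] := ubnP (sz f).
elim: m f => [|m IH] f; first by rewrite ltn0.
move=> szm Lf Sf.
case: (leqP (sz f) (2 ^ #|{: idx Ls}|)) => [le|gt]; first by exists f.
have [g [h [gf hf ne E]]] := pigeon gt.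
wlog gh : g h gf hf ne E / g \notin subf h.
  move=> W; case: (boolP (g \in subf h)) => [gh|]; last exact: W.
  apply: (W h g hf gf _ (esym E)); first by rewrite eq_sym.
  apply/negP => hg; move/eqP: ne; apply; exact: subf_antisym.
have Eq : forall C, List.In C Ls -> forall q : cgs_Q C, sat g q <-> sat h q := sigf_eq E.
pose f' := repl g h f.
have M : forall C, List.In C Ls -> models C f' <-> models C f.
  move=> C HC; rewrite /models; split=> H q Hq.
    by apply/(sat_repl (Eq C HC)); apply: H.
  by apply/(sat_repl (Eq C HC)); apply: H.
have Sf' : separating Pos Neg f'.
  case: Sf => P N; split => C HC.
    by apply/(M C); [apply: List.in_or_app; left | apply: P].
  by move=> /(M C) H; apply: (N C HC); apply: H; apply: List.in_or_app; right.
have Lf' : in_frag L f' by apply: in_frag_repl => //; exact: in_frag_subf Lf hf.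
have lt : sz f' < sz f.
  rewrite /sz.
  set U := undup (subf f).
  have gU : g \in U by rewrite mem_undup.
  have sub : {subset undup (subf f') <= map (repl g h) (rem g U)}.
    move=> x; rewrite mem_undup => /subf_repl [xh | [s sf ->]].
    - have gx : g \notin subf x.
        by apply: contra gh => gx; exact: subf_trans gx xh.
      rewrite -(repl_id h gx); apply: map_f.
      rewrite (mem_rem_uniq _ (undup_uniq _)) inE mem_undup (subf_trans xh hf) andbT.
      by apply/eqP => xg; rewrite xg subf_refl in gx.
    - case: (eqVneq s g) => [-> | sg].
        rewrite repl_self -{1}(repl_id h gh); apply: map_f.
        by rewrite (mem_rem_uniq _ (undup_uniq _)) inE mem_undup hf andbT eq_sym.
      apply: map_f.
      by rewrite (mem_rem_uniq _ (undup_uniq _)) inE mem_undup sf andbT sg.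
  have := uniq_leq_size (undup_uniq _) sub; rewrite size_map size_rem //.
  have pos : 0 < size U by case: (U) gU.
  lia.
have [|f'' H] := IH f' _ Lf' Sf'; first lia.
by exists f''.
Qed.

End Main.


Theorem corollary8 (AP : finType) (hAP : 0 < #|AP|) (L : op -> bool)
    (Pos Neg : seq (CGS AP))
    (hPos : List.NoDup Pos) (hNeg : List.NoDup Neg) :
  (exists f : form AP, in_frag L f /\ separating Pos Neg f) ->
  exists f : form AP, [/\ in_frag L f, separating Pos Neg f &
                          sz f <= 2 ^ sample_size Pos Neg].
Proof.
move=> [f [Lf Sf]].
case/card_gt0P: hAP => a0 _.
have Pne : [set a0] != set0 by apply/set0Pn; exists a0; rewrite inE.
pose d0 : CGS AP := @Build_CGS AP unit set0 1 erefl [set a0] Pne (fun _ => set0)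
  (fun _ => sub0set _) (fun _ _ => 1) (fun _ _ => erefl) (fun _ _ => tt).
exact: (main d0 Lf Sf).
Qed.
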